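(* For all integers $p,l\geq 0$ and $t>0$, $$D^{l}\left\{\frac{(1-t)^{p+1}}{t}\right\}=(-1)^{l}\sum_{s=0}^{l}\frac{(l+s)!\,(p+1)!}{2^{s}s!\,(l-s)!\,(p-l+s+1)!}\frac{(1-t)^{p-l+s+1}}{t^{l+s+1}}=(-1)^{l}l!\sum_{s=0}^{l}\frac{1}{2^{s}}\binom{p+1}{l-s}\binom{l+s}{s}\frac{(1-t)^{p-l+s+1}}{t^{l+s+1}}.$$
   Context: $D$ denotes the operator $(D\varphi)(t)=\frac{1}{t}\varphi'(t)$ acting on functions of $t$, and $D^l$ its $l$-fold iterate. Conventions: $\binom{a}{b}=0$ if $b>a$ or $b<0$, and $1/N!=0$ for negative integers $N$. *)

(* Defs.v *)
From HB Require Import structures.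
From mathcomp Require Import all_boot all_order all_algebra.
From mathcomp Require Import all_classical all_reals all_analysis.
Set Implicit Arguments. Unset Strict Implicit. Unset Printing Implicit Defensive.
Import Order.TTheory GRing.Theory Num.Theory.
Local Open Scope ring_scope.

Definition Dop (R : realType) (phi : R -> R) : R -> R :=
  fun t => derive1 phi t / t.

Definition Dpow (R : realType) (l : nat) (phi : R -> R) : R -> R :=
  iter l (@Dop R) phi.

Definition invfact (R : realType) (N : int) : R :=
  match N with Posz n => (n`!%:R)^-1 | Negz _ => 0 end.

(* Main.v *)
Require Import Defs.
From HB Require Import structures.
From mathcomp Require Import all_boot all_order all_algebra.
From mathcomp Require Import all_classical all_reals all_analysis.
From mathcomp Require Import ring lra zify.
Import Order.TTheory GRing.Theory Num.Theory.
Lemma Ja n l : l.+1 * ('C(n, l.+1 - 0) * 'C(l.+1 + 0, 0)) = (n + 0 - l) * ('C(n, l - 0) * 'C(l + 0, 0)).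
Proof. by rewrite !subn0 !addn0 !bin0 !muln1 mul_bin_left. Qed.

Lemma Jc n l s : s < l ->
  l.+1 * ('C(n, l.+1 - s.+1) * 'C(l.+1 + s.+1, s.+1)) =
  (n + s.+1 - l) * ('C(n, l - s.+1) * 'C(l + s.+1, s.+1)) + 2 * (l + s.+1) * ('C(n, l - s) * 'C(l + s, s)).
Proof.
move=> sl.
have [r ->] : exists r, l = r + s.+1 by exists (l - s.+1); lia.
have e1 : r + s.+1 - s.+1 = r by lia.
have e2 : r + s.+1 - s = r.+1 by lia.
have e3 : n + s.+1 - (r + s.+1) = n - r by lia.
rewrite subSS e1 e2 e3.
have H1 := mul_bin_left n r.
set N := r + s.+1 + s.
have f1 : (r + s.+1).+1 + s.+1 = N.+2 by rewrite /N; lia.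
have f2 : r + s.+1 + s.+1 = N.+1 by rewrite /N; lia.
rewrite f1 f2 binS.
have H2 := mul_bin_left N.+1 s.
have H3 := mul_bin_diag N.+1 s.
have f3 : N.+1 - s = (r + s.+1).+1 by rewrite /N; lia.
rewrite f3 /= in H2 H3.
set A1 := 'C(n, r.+1) in H1 *.
set A2 := 'C(n, r) in H1 *.
set X := 'C(N.+1, s.+1) in H2 H3 *.
set Y := 'C(N.+1, s) in H2 H3 *.
set Z := 'C(N, s) in H3 *.
rewrite /N in H3 *.
nia.
Qed.

Lemma Jb n l :
  l.+1 * ('C(n, l.+1 - l.+1) * 'C(l.+1 + l.+1, l.+1)) = 2 * (l + l.+1) * ('C(n, l - l) * 'C(l + l, l)).
Proof.
rewrite !subnn !bin0 !mul1n.
have f1 : l.+1 + l.+1 = (l + l.+1).+1 by lia.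
rewrite f1 binS.
have H2 := mul_bin_left (l + l.+1) l.
have H3 := mul_bin_diag (l + l.+1) l.
have f3 : l + l.+1 - l = l.+1 by lia.
rewrite f3 /= in H2 H3.
have f4 : (l + l.+1).-1 = l + l by lia.
rewrite f4 in H3.
nia.
Qed.


Local Open Scope ring_scope.

Definition Tm {R : realType} (m k : nat) (y : R) : R := (1 - y) ^+ m / y ^+ k.

Lemma is_deriveV' (R : realType) (f : R -> R) x v df : f x != 0 -> is_derive x v f df ->
  is_derive x v (fun y => (f y)^-1) (- (f x) ^- 2 *: df).
Proof.
move=> fx0 [hd hv]; apply: DeriveDef; first exact: derivableV.
by rewrite deriveV // hv.
Qed.

Lemma is_derive_T {R : realType} m k (x : R) : x != 0 ->
  is_derive x 1 (Tm m k.+1) (- (m%:R * (1 - x) ^+ m.-1) / x ^+ k.+1 - k.+1%:R * (1 - x) ^+ m / x ^+ k.+2).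
Proof.
move=> x0.
have h1 : is_derive x (1:R) (fun y : R => 1 - y) (-1).
  have := @is_deriveB R R R (cst 1) id x 1 0 1 _ _.
  move=> H; rewrite sub0r in H; exact: (H (is_derive_cst _ _ _) (is_derive_id _ _)).
have h2 := @is_deriveX R R (fun y : R => 1 - y) m x 1 _ h1.
have h3 := @is_deriveX R R id k.+1 x 1 _ (is_derive_id x 1).
have h4 := @is_deriveV' R _ x 1 _ _ h3.
have xk : (id ^+ k.+1 : R -> R) x != 0 by rewrite exprfctE expf_neq0.
have h5 := @is_deriveM R R _ _ x 1 _ _ h2 (h4 xk).
rewrite /Tm.
have -> : (fun y : R => (1 - y) ^+ m / y ^+ k.+1) = (fun y => 1 - y) ^+ m * (fun y => ((id ^+ k.+1) y)^-1).
  by apply/funext => y; rewrite /= !exprfctE.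
eapply is_derive_eq; [exact h5|].
rewrite !exprfctE /GRing.scale /= !exprS.
by field; rewrite ?expf_neq0 ?mulf_neq0.
Qed.

Definition bco {R : realType} (p l s : nat) : R :=
  if (s <= l)%N then (-1) ^+ l * l`!%:R / 2 ^+ s * ('C(p.+1, l - s) * 'C(l + s, s))%:R else 0.

Definition G {R : realType} (p l : nat) (x : R) : R :=
  \sum_(s < l.+1) bco p l s * Tm (p.+1 + s - l) (l + s).+1 x.

Lemma is_derive_G (R : realType) p l (x : R) : x != 0 ->
  is_derive x 1 (G p l) (\sum_(s < l.+1) bco p l s *
     (- ((p.+1 + s - l)%:R * (1 - x) ^+ (p.+1 + s - l).-1) / x ^+ (l + s).+1
      - (l + s).+1%:R * (1 - x) ^+ (p.+1 + s - l) / x ^+ (l + s).+2)).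
Proof.
move=> x0.
have H := @is_derive_sum R R R l.+1 (fun s => bco p l s \*: Tm (p.+1 + s - l) (l + s).+1) x 1 _
  (fun s => is_deriveZ (bco p l s) (is_derive_T (p.+1 + s - l) (l + s) x x0)).
move: H; rewrite fct_sumE; exact.
Qed.
Lemma bco_gt (R : realType) p l s : (l < s)%N -> bco p l s = 0 :> R.
Proof. by move=> ls; rewrite /bco leqNgt ls. Qed.

Lemma keyl (R : realType) (l s' : nat) (X Y Z m : R) :
  l.+1%:R * X = m * Y + 2 * (l + s'.+1)%:R * Z ->
  (-1) ^+ l.+1 * l.+1`!%:R / 2 ^+ s'.+1 * X =
  - m * ((-1) ^+ l * l`!%:R / 2 ^+ s'.+1 * Y) - (l + s'.+1)%:R * ((-1) ^+ l * l`!%:R / 2 ^+ s' * Z).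
Proof.
move=> J.
have l0 : l.+1%:R != 0 :> R by rewrite pnatr_eq0.
have HX : X = (m * Y + 2 * (l + s'.+1)%:R * Z) / l.+1%:R.
  by apply: (mulfI l0); rewrite J; field.
have P0 : (2 ^+ s' : R) != 0 by rewrite expf_neq0 // pnatr_eq0.
rewrite HX factS natrM !exprS.
move: (l`!%:R : R) ((-1) ^+ l : R) (2 ^+ s' : R) P0 => F S P P0.
field.
by rewrite P0 /= addrC natr1.
Qed.


Lemma keyl0 (R : realType) (l : nat) (X Y m : R) :
  l.+1%:R * X = m * Y ->
  (-1) ^+ l.+1 * l.+1`!%:R / 2 ^+ 0 * X = - m * ((-1) ^+ l * l`!%:R / 2 ^+ 0 * Y).
Proof.
move=> J; rewrite factS natrM exprS expr0 !divr1.
move: (l`!%:R : R) ((-1) ^+ l : R) => F S.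
have -> : -1 * S * (l.+1%:R * F) * X = - (S * F) * (l.+1%:R * X) by ring.
by rewrite J; ring.
Qed.

Lemma bco_rec (R : realType) p l s : (s <= l.+1)%N ->
  bco p l.+1 s = - (p.+1 + s - l)%:R * bco p l s
     - (if s is s'.+1 then (l + s)%:R * bco p l s' else 0) :> R.
Proof.
case: s => [|s] sl.
  rewrite /bco !leq0n subr0 !(natrM _ (binomial _ _)).
  apply: keyl0.
  have := Ja p.+1 l => /(congr1 (fun k => k%:R : R)).
  by rewrite !natrM.
case: (ltngtP s l) => [lt|gt|->].
- rewrite /bco sl lt (ltnW lt) !(natrM _ (binomial _ _)).
  apply: keyl.
  have := Jc p.+1 l s lt => /(congr1 (fun k => k%:R : R)).
  by rewrite natrD !natrM.
- by exfalso; lia.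
- rewrite (@bco_gt R p l l.+1 (ltnSn l)) -(mulr0 ((-1) ^+ l * l`!%:R / 2 ^+ l.+1 : R)).
  rewrite /bco !leqnn !(natrM _ (binomial _ _)).
  apply: keyl.
  rewrite mulr0 add0r.
  have := Jb p.+1 l => /(congr1 (fun k => k%:R : R)).
  by rewrite !natrM.
Qed.


Lemma G_step (R : realType) p l (x : R) : x != 0 ->
  (\sum_(s < l.+1) bco p l s *
     (- ((p.+1 + s - l)%:R * (1 - x) ^+ (p.+1 + s - l).-1) / x ^+ (l + s).+1
      - (l + s).+1%:R * (1 - x) ^+ (p.+1 + s - l) / x ^+ (l + s).+2)) / x = G p l.+1 x.
Proof.
move=> x0.
rewrite /G; symmetry.
under eq_bigr => s _ do rewrite (@bco_rec R p l s (ltn_ord s)) mulrBl.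
rewrite sumrB mulr_suml.
symmetry; under eq_bigr => s _ do rewrite mulrBr mulrBl.
rewrite sumrB; symmetry.
congr (_ - _).
- rewrite big_ord_recr /= (@bco_gt R p l l.+1 (ltnSn l)) mulr0 mul0r addr0.
  apply: eq_bigr => s _.
  rewrite subnS addSn /Tm [x ^+ (l + s).+2]exprS.
  have P0 : x ^+ (l + s).+1 != 0 by rewrite expf_neq0.
  move: (x ^+ (l + s).+1) P0 ((1 - x) ^+ (p.+1 + s - l).-1) ((p.+1 + s - l)%:R : R) (bco p l s : R) => P P0 Q M B.
  by field; rewrite P0 x0.
- rewrite big_ord_recl /= mul0r add0r.
  apply: eq_bigr => s _.
  rewrite /bump leq0n add1n add0n !addnS subSS (addSn l s) /Tm [x ^+ (l + s).+3]exprS.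
  have P0 : x ^+ (l + s).+2 != 0 by rewrite expf_neq0.
  move: (x ^+ (l + s).+2) P0 ((1 - x) ^+ (p.+1 + s - l)) ((l + s).+1%:R : R) (bco p l s : R) => P P0 Q M B.
  by field; rewrite P0 x0.
Qed.

Lemma Dpow_G (R : realType) p l : forall x : R, 0 < x ->
  Dpow l (fun x : R => (1 - x) ^+ p.+1 / x) x = G p l x.
Proof.
elim: l => [|l IH] x x0.
  rewrite /Dpow /= /G big_ord1 /bco /Tm /=.
  by rewrite !subn0 !addn0 !bin0 fact0 !expr0 expr1 divr1 !mul1r.
have x0' : x != 0 by rewrite gt_eqF.
rewrite /Dpow iterS -/(Dpow l _) /Dop derive1E.
rewrite (@near_eq_derive R R^o R^o _ (G p l)); last first.
  apply: filterS (lt_nbhsr x0) => y y0.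
  exact: IH.
have H := @is_derive_G R p l x x0'; rewrite derive_val.
exact: G_step.
Qed.

Lemma invfact_neg (R : realType) (N : int) : (N < 0)%R -> invfact R N = 0.
Proof. by case: N. Qed.

Lemma term1 (R : realType) p l s (t : R) : t != 0 -> (s <= l)%N ->
  let e (s : nat) : int := (p%:Z - l%:Z + s%:Z + 1)%R in
  bco p l s * Tm (p.+1 + s - l) (l + s).+1 t =
  (-1) ^+ l * ((l + s)`!%:R * (p.+1)`!%:R * ((2 ^+ s * s`!%:R * (l - s)`!%:R)^-1 * invfact R (e s))
       * ((1 - t) ^ (e s) / t ^+ (l + s).+1)).
Proof.
move=> t0 sl e.
rewrite /bco sl /Tm.
case: (leqP (l - s) p.+1) => hr.
  have E : e s = Posz (p.+1 + s - l) by rewrite /e; lia.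
  rewrite E /invfact -exprnP.
  have B1 := bin_fact hr.
  have B2 := bin_fact (leq_addl l s).
  have k1 : (p.+1 - (l - s) = p.+1 + s - l)%N by lia.
  have k2 : (l + s - s = l)%N by lia.
  rewrite k1 in B1; rewrite k2 in B2.
  rewrite -B1 -B2 !natrM.
  have f0 : forall n, (n`!%:R : R) != 0 by move=> n; rewrite pnatr_eq0 -lt0n fact_gt0.
  have P0 : (2 ^+ s : R) != 0 by rewrite expf_neq0 // pnatr_eq0.
  move: (f0 l) (f0 s) (f0 (l - s)%N) (f0 (p.+1 + s - l)%N) P0.
  move: (l`!%:R : R) (s`!%:R : R) ((l - s)`!%:R : R) ((p.+1 + s - l)`!%:R : R) (2 ^+ s : R).
  move=> A B C D P A0 B0 C0 D0 P0.
  by field; rewrite ?A0 ?B0 ?C0 ?D0 ?P0 ?expf_neq0.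
have E : (e s < 0)%R.
  rewrite /e; lia.
by rewrite (@invfact_neg R (e s) E) bin_small // mul0n !(mulr0, mul0r).
Qed.

Lemma term2 (R : realType) p l s (t : R) : t != 0 -> (s <= l)%N ->
  let e (s : nat) : int := (p%:Z - l%:Z + s%:Z + 1)%R in
  bco p l s * Tm (p.+1 + s - l) (l + s).+1 t =
  (-1) ^+ l * l`!%:R * ((2 ^+ s)^-1 * 'C(p.+1, l - s)%:R * 'C(l + s, s)%:R
       * ((1 - t) ^ (e s) / t ^+ (l + s).+1)).
Proof.
move=> t0 sl e.
rewrite /bco sl /Tm.
case: (leqP (l - s) p.+1) => hr.
  have E : e s = Posz (p.+1 + s - l) by rewrite /e; lia.
  rewrite E -exprnP natrM.
  move: (l`!%:R : R) => A.
  ring.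
by rewrite bin_small // mul0n !(mulr0, mul0r).
Qed.

Theorem lemma3p2 (R : realType) (p l : nat) (t : R) (ht : 0 < t) :
  let e (s : nat) : int := (p%:Z - l%:Z + s%:Z + 1)%R in
  Dpow l (fun x : R => (1 - x) ^+ p.+1 / x) t =
    (-1) ^+ l * \sum_(0 <= s < l.+1)
      ((l + s)`!%:R * (p.+1)`!%:R * ((2 ^+ s * s`!%:R * (l - s)`!%:R)^-1 * invfact R (e s))
       * ((1 - t) ^ (e s) / t ^+ (l + s).+1))
  /\
  (-1) ^+ l * \sum_(0 <= s < l.+1)
      ((l + s)`!%:R * (p.+1)`!%:R * ((2 ^+ s * s`!%:R * (l - s)`!%:R)^-1 * invfact R (e s))
       * ((1 - t) ^ (e s) / t ^+ (l + s).+1))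
  =
  (-1) ^+ l * l`!%:R * \sum_(0 <= s < l.+1)
      ((2 ^+ s)^-1 * 'C(p.+1, l - s)%:R * 'C(l + s, s)%:R
       * ((1 - t) ^ (e s) / t ^+ (l + s).+1)).
Proof.
move=> e.
have t0 : t != 0 by rewrite gt_eqF.
have H1 : G p l t = (-1) ^+ l * \sum_(0 <= s < l.+1)
      ((l + s)`!%:R * (p.+1)`!%:R * ((2 ^+ s * s`!%:R * (l - s)`!%:R)^-1 * invfact R (e s))
       * ((1 - t) ^ (e s) / t ^+ (l + s).+1)).
  rewrite /G big_mkord mulr_sumr; apply: eq_bigr => s _.
  by rewrite (@term1 R p l s t t0 (ltn_ord s : (s <= l)%N)).
have H2 : G p l t = (-1) ^+ l * l`!%:R * \sum_(0 <= s < l.+1)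
      ((2 ^+ s)^-1 * 'C(p.+1, l - s)%:R * 'C(l + s, s)%:R
       * ((1 - t) ^ (e s) / t ^+ (l + s).+1)).
  rewrite /G big_mkord mulr_sumr; apply: eq_bigr => s _.
  by rewrite (@term2 R p l s t t0 (ltn_ord s : (s <= l)%N)).
split; first by rewrite Dpow_G.
by rewrite -H1 -H2.
Qed.
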